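(* Let $L$ be a finite $\mathcal{L}$-lattice and let $V(\mathcal{L})\subseteq L$ be the set of values of closed formulas, i.e. of formulas containing no variables. (1) If $V(\mathcal{L})=\emptyset$, then $L$ does not have the interpolation property. (2) If $V(\mathcal{L})=L$, then $L$ has the interpolation property.
   Context: A lattice-oriented signature $\mathcal{L}$ is a finite set of connectives. Each connective $c$ has an arity $n_c\in\mathbb{N}$ and a polarity $p_c:\{1,\dots,n_c\}\to\{-,+\}$. The signature contains binary connectives $\lor,\land,\to$ with $p_\lor(1)=p_\lor(2)=p_\land(1)=p_\land(2)=+$, $p_\to(1)=-$ and $p_\to(2)=+$; nullary connectives are truth constants. A finite $\mathcal{L}$-lattice is a finite set $L$ together with an $n_c$-ary operation $c^L$ on $L$ for each connective $c$, such that: - $(L,\lor^L,\land^L)$ is a lattice, with order $x\le y$ iff $x\land y=x$; its top element is denoted $1$; - $c^L$ is monotone in every argument $i$ with $p_c(i)=+$ and antitone in every argument $i$ with $p_c(i)=-$; - for all $a,b\in L$: $1\le a\to^L b$ iff $a\le b$. Formulas (words) are built from propositional variables using the connectives. A valuation assigns elements of $L$ to the variables and extends to all formulas via the operations $c^L$. For formulas $a,b$, ''$a\le b$ is valid'' means that the value of $a$ is $\le$ the value of $b$ under every valuation. For a valid $a\le b$, the variables occurring only in $a$ are the left variables, those occurring only in $b$ are the right variables, and those occurring in both are the intersection variables. $L$ has the interpolation property iff for all formulas $a,b$ with $a\le b$ valid there is a formula $i$ whose variables are all intersection variables of $a,b$ such that $a\le i$ and $i\le b$ are valid. If there are no intersection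 variables, $i$ must be a closed formula. *)

(* Defs.v *)
From mathcomp Require Import all_boot.
Set Implicit Arguments. Unset Strict Implicit. Unset Printing Implicit Defensive.

(* A signature: a finite type C of connectives, each with an arity and a
   polarity (true = +, false = -). *)
Section Lattices.
Variable C : finType.
Variable ar : C -> nat.

Inductive form : Type :=
| Var of nat
| Op (c : C) of {ffun 'I_(ar c) -> form}.

Fixpoint occurs (n : nat) (t : form) : bool :=
  match t with
  | Var m => m == n
  | Op c f => [exists i, occurs n (f i)]
  end.

Definition closed_form (t : form) : Prop := forall n, ~~ occurs n t.

Variable L : finType.
Variable interp : forall c : C, {ffun 'I_(ar c) -> L} -> L.

Fixpoint eval (v : nat -> L) (t : form) : L :=
  match t with
  | Var n => v n
  | Op c f => interp [ffun i => eval v (f i)]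
  end.

(* binary application of a connective (meaningful when ar c = 2):
   argument 0 is x, argument 1 is y *)
Definition app2 (c : C) (x y : L) : L :=
  interp [ffun i : 'I_(ar c) => if nat_of_ord i == 0 then x else y].

Variables cor cand cimp : C.
Definition ljoin := app2 cor.
Definition lmeet := app2 cand.
Definition lle (x y : L) : Prop := lmeet x y = x.

Definition is_lattice : Prop :=
  [/\ (forall x y, ljoin x y = ljoin y x) /\
      (forall x y, lmeet x y = lmeet y x),
      (forall x y z, ljoin x (ljoin y z) = ljoin (ljoin x y) z),
      (forall x y z, lmeet x (lmeet y z) = lmeet (lmeet x y) z),
      (forall x y, ljoin x (lmeet x y) = x) &
      (forall x y, lmeet x (ljoin x y) = x)].

Definition is_top (t : L) : Prop := forall x, lle x t.

Variable pol : forall c : C, 'I_(ar c) -> bool.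

Definition respects_polarity : Prop :=
  forall (c : C) (i : 'I_(ar c)) (f g : {ffun 'I_(ar c) -> L}),
    (forall j, j != i -> f j = g j) -> lle (f i) (g i) ->
    if pol i then lle (interp f) (interp g) else lle (interp g) (interp f).

Definition is_L_lattice : Prop :=
  [/\ is_lattice,
      (exists t, is_top t),
      respects_polarity &
      (forall t, is_top t -> forall a b, lle t (app2 cimp a b) <-> lle a b)].

Definition valid (a b : form) : Prop := forall v, lle (eval v a) (eval v b).

Definition interpolation_property : Prop :=
  forall a b : form, valid a b ->
    exists i : form,
      (forall n, occurs n i -> occurs n a && occurs n b) /\
      valid a i /\ valid i b.

Definition closed_value (x : L) : Prop :=
  exists t : form, closed_form t /\ forall v, eval v t = x.

End Lattices.

(* Main.v *)
Require Import Defs.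
From mathcomp Require Import all_boot.
Set Implicit Arguments. Unset Strict Implicit.

Fixpoint form_rect' (C : finType) (ar : C -> nat) (P : form ar -> Type)
  (HV : forall n, P (Var ar n))
  (HO : forall c (f : {ffun 'I_(ar c) -> form ar}), (forall i, P (f i)) -> P (Op f)) (t : form ar) : P t :=
  match t with Var n => HV n | Op c f => HO c f (fun i => form_rect' HV HO (f i)) end.

Fixpoint subst (C : finType) (ar : C -> nat) (n : nat) (s t : form ar) : form ar :=
  match t with Var m => if m == n then s else Var ar m
  | Op c f => Op [ffun i => subst n s (f i)] end.

Fixpoint bnd (C : finType) (ar : C -> nat) (t : form ar) : nat :=
  match t with Var m => m.+1 | Op c f => \max_i bnd (f i) end.

Lemma eval_agree (C : finType) (ar : C -> nat) (L : finType) interp (t : form ar) :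
  forall (v w : nat -> L), (forall m, occurs m t -> v m = w m) -> eval interp v t = eval interp w t.
Proof.
elim/form_rect': t => [n|c f IH] v w H /=; first by apply: H; rewrite /= eqxx.
congr interp; apply/ffunP => i; rewrite !ffunE; apply: IH => m Hm; apply: H => /=.
by apply/existsP; exists i.
Qed.

Lemma bndP (C : finType) (ar : C -> nat) (t : form ar) m : occurs m t -> m < bnd t.
Proof.
elim/form_rect': t => [n|c f IH] /=; first by move/eqP->.
case/existsP => i /IH H; apply: (leq_trans H); exact: (leq_bigmax i).
Qed.

Lemma eval_subst (C : finType) (ar : C -> nat) (L : finType) interp n (s t : form ar) (v : nat -> L) :
  eval interp v (subst n s t) = eval interp (fun m => if m == n then eval interp v s else v m) t.
Proof.
elim/form_rect': t => [m|c f IH] /=; first by case: (m == n).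
by congr interp; apply/ffunP => i; rewrite !ffunE IH.
Qed.

Lemma occurs_subst (C : finType) (ar : C -> nat) n (s t : form ar) m :
  occurs m (subst n s t) -> (occurs m t && (m != n)) || occurs m s.
Proof.
elim/form_rect': t => [k|c f IH] /=.
  case: eqP => [->|Hk]; first by move=> ->; rewrite orbT.
  by move/eqP => Hkm; subst k; rewrite eqxx /=; apply/orP; left; apply/eqP.
case/existsP => i; rewrite ffunE => /IH /orP [/andP [H1 H2]|->]; last by rewrite orbT.
by rewrite H2 andbT; apply/orP; left; apply/existsP; exists i.
Qed.

Lemma lat_facts (C : finType) (ar : C -> nat) (L : finType) (interp : forall c : C, {ffun 'I_(ar c) -> L} -> L) (cor cand : C) :
  is_lattice interp cor cand ->
  [/\ (forall x : L, lle interp cand x x),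
      (forall x y z : L, lle interp cand x y -> lle interp cand y z -> lle interp cand x z),
      (forall x y : L, lle interp cand x (ljoin interp cor x y)),
      (forall x y : L, lle interp cand y (ljoin interp cor x y)) &
      (forall x y z : L, lle interp cand x z -> lle interp cand y z -> lle interp cand (ljoin interp cor x y) z)].
Proof.
case=> [[jC mC] jA mA jm mj]; rewrite /lle.
have mm : forall x : L, lmeet interp cand x x = x.
  by move=> x; rewrite -{2}(jm x x) mj.
have leJ : forall x z : L, lmeet interp cand x z = x -> ljoin interp cor x z = z.
  by move=> x z H; rewrite -H jC mC jm.
have Jle : forall x z : L, ljoin interp cor x z = z -> lmeet interp cand x z = x.
  by move=> x z H; rewrite -H mj.
split.
- exact: mm.
- by move=> x y z H1 H2; rewrite -H1 -mA H2.
- by move=> x y; rewrite mj.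
- by move=> x y; rewrite jC mj.
- move=> x y z H1 H2; apply: Jle; rewrite -jA (leJ _ _ H2) (leJ _ _ H1) //.
Qed.

Theorem mainTheorem2
  (C : finType) (ar : C -> nat) (pol : forall c : C, 'I_(ar c) -> bool)
  (cor cand cimp : C)
  (ar_or : ar cor = 2) (ar_and : ar cand = 2) (ar_imp : ar cimp = 2)
  (pol_or : forall i, pol cor i = true)
  (pol_and : forall i, pol cand i = true)
  (pol_imp : forall i : 'I_(ar cimp), pol cimp i = (nat_of_ord i == 1))
  (L : finType) (interp : forall c : C, {ffun 'I_(ar c) -> L} -> L)
  (HL : is_L_lattice interp cor cand cimp pol) :
  ((forall x : L, ~ closed_value interp x) ->
     ~ interpolation_property interp cand) /\
  ((forall x : L, closed_value interp x) ->
     interpolation_property interp cand).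
Proof.
case: HL => Hlat [t Ht] _ Himp.
case: (lat_facts Hlat) => lrefl ltrans lj1 lj2 ljlub.
split.
  move=> Hnone Hint.
  pose a := Var ar 0.
  pose b := Op (c:=cimp) [ffun _ => Var ar 1].
  have Hab : valid interp cand a b.
    move=> v; apply: (ltrans _ t); first exact: Ht.
    have -> : eval interp v b = app2 interp cimp (v 1) (v 1).
      by rewrite /= /app2; congr interp; apply/ffunP => i; rewrite !ffunE; case: ifP.
    by apply/(Himp t Ht); apply: lrefl.
  case: (Hint a b Hab) => i [Hocc _].
  apply: (Hnone (eval interp (fun _ => t) i)); exists i; split.
    move=> n; apply/negP => /Hocc /andP [H1 /existsP [j]].
    by rewrite ffunE /=; move: H1 => /= /eqP <-.
  move=> v; apply: eval_agree => m /Hocc /andP [H1 /existsP [j]].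
  by rewrite ffunE /=; move: H1 => /= /eqP <-.
move=> Hall a b Hab.
have [K HK] : exists K : L -> form ar,
    forall x, closed_form (K x) /\ forall v, eval interp v (K x) = x.
  have H : forall x : L, exists k : form ar,
      closed_form k /\ forall v, eval interp v k = x.
    by move=> x; case: (Hall x) => k Hk; exists k.
  case: (@fin_all_exists L (fun _ => form ar) _ H) => K HK; by exists K.
pose Jf (t1 t2 : form ar) : form ar :=
  Op (c:=cor) [ffun i : 'I_(ar cor) => if nat_of_ord i == 0 then t1 else t2].
have evJ : forall v t1 t2, eval interp v (Jf t1 t2) =
    ljoin interp cor (eval interp v t1) (eval interp v t2).
  by move=> v t1 t2; rewrite /= /ljoin /app2; congr interp; apply/ffunP => i; rewrite !ffunE; case: ifP.
have occJ : forall m t1 t2, occurs m (Jf t1 t2) -> occurs m t1 || occurs m t2.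
  by move=> m t1 t2 /existsP [i]; rewrite ffunE; case: ifP => _ H; apply/orP; first [by left | by right].
clearbody Jf.
pose upd (v : nat -> L) n x := fun m => if m == n then x else v m.
have evS : forall v n x X, eval interp v (subst n (K x) X) = eval interp (upd v n x) X.
  by move=> v n x X; rewrite eval_subst (proj2 (HK x)).
pose E n X := foldr (fun x acc => Jf (subst n (K x) X) acc) (subst n (K t) X) (enum L).
have E_up : forall n X v, lle interp cand (eval interp v X) (eval interp v (E n X)).
  move=> n X v.
  have H : forall s x, x \in t :: s -> lle interp cand (eval interp (upd v n x) X)
      (eval interp v (foldr (fun x acc => Jf (subst n (K x) X) acc) (subst n (K t) X) s)).
    elim=> [|y s IH] x /=.
      by rewrite inE => /eqP ->; rewrite evS; apply: lrefl.
    rewrite evJ !inE => /or3P [/eqP ->|/eqP ->|Hx].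
    - apply: (ltrans _ _ _ _ (lj2 _ _)); apply: IH; exact: mem_head.
    - by rewrite evS; apply: lj1.
    - apply: (ltrans _ _ _ _ (lj2 _ _)); apply: IH; by rewrite inE Hx orbT.
  have -> : eval interp v X = eval interp (upd v n (v n)) X.
    by apply: eval_agree => m _; rewrite /upd; case: eqP => // ->.
  by apply: H; rewrite inE mem_enum orbT.
have E_lub : forall n X v y, (forall x, lle interp cand (eval interp (upd v n x) X) y) ->
    lle interp cand (eval interp v (E n X)) y.
  move=> n X v y H; rewrite /E; elim: (enum L) => [|z s IH] /=; first by rewrite evS.
  by rewrite evJ; apply: ljlub => //; rewrite evS.
have E_occ : forall n X m, occurs m (E n X) -> occurs m X && (m != n).
  move=> n X m; rewrite /E.
  have Hs : forall x, occurs m (subst n (K x) X) -> occurs m X && (m != n).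
    move=> x /occurs_subst /orP [//|H].
    by move: (proj1 (HK x) m); rewrite H.
  elim: (enum L) => [|z s IH] /=; first exact: Hs.
  by move/occJ/orP => [/Hs|/IH].
have I_occ : forall l m, occurs m (foldr E a l) -> occurs m a && (m \notin l).
  elim=> [|n l IH] m /=; first by move=> ->.
  move/E_occ/andP => [/IH /andP [H1 H2] H3].
  by rewrite H1 inE negb_or H3 H2.
have I_up : forall l v, lle interp cand (eval interp v a) (eval interp v (foldr E a l)).
  elim=> [|n l IH] v /=; first exact: lrefl.
  apply: (ltrans _ _ _ _ (E_up _ _ _)); exact: IH.
have I_lub : forall l v y, (forall v', (forall m, m \notin l -> v' m = v m) ->
      lle interp cand (eval interp v' a) y) ->
    lle interp cand (eval interp v (foldr E a l)) y.
  elim=> [|n l IH] v y H /=; first by apply: H.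
  apply: E_lub => x; apply: IH => v' Hv'; apply: H => m.
  rewrite inE negb_or => /andP [Hmn Hml]; rewrite Hv' // /upd.
  by rewrite (negPf Hmn).
pose lv := filter (fun m => ~~ occurs m b) (iota 0 (bnd a)).
exists (foldr E a lv); split; [|split].
- move=> m /I_occ /andP [Ha Hl]; rewrite Ha /=.
  move: Hl; rewrite mem_filter mem_iota /= add0n (bndP Ha) andbT.
  by move/negPn.
- move=> v; exact: I_up.
- move=> v; apply: I_lub => v' Hv'.
  have -> : eval interp v b = eval interp v' b.
    apply: eval_agree => m Hm; rewrite Hv' //.
    by rewrite mem_filter Hm.
  exact: Hab.
Qed.
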